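(* Let $f:\mathbb R^p\to\mathbb R$ be differentiable with Lipschitz gradient and $m$-strongly convex ($m\geqslant0$). Let $X,Y$ be square-integrable $p$-dimensional random vectors and $(W_t)_{t\geqslant0}$ a $p$-dimensional Brownian motion independent of $Y$. Set $X_t=X+\sqrt2\,W_t$ and let $(L_t)_{t\geqslant0}$ solve $dL_t=-\nabla f(L_t)\,dt+\sqrt2\,dW_t$, $L_0=Y$. For $h\geqslant0$ set $\psi(h)=\|X_h-L_h\|_2^2+m\int_0^h\|X_h-L_s\|_2^2\,ds$. Then $$\psi(h)\leqslant\|X-L_0\|_2^2+\int_0^h2\big(f(X_s)-f(L_s)\big)\,ds+R_1(h),$$ $$\psi(h)\leqslant\|X-L_0\|_2^2+2h\big(f(X_h)-f(L_h)\big)+R_2(h),$$ where $$R_1(h)=m\int_0^h\big\{\|X_h-L_s\|_2^2-\|X_s-L_s\|_2^2\big\}ds,\qquad R_2(h)=2\int_0^h\big\{f(L_h)-f(L_s)-\sqrt2(W_h-W_s)^\top\nabla f(L_s)\big\}ds .$$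
   Context: $m$-strong convexity means $f(\theta')\geqslant f(\theta)+\nabla f(\theta)^\top(\theta'-\theta)+\frac m2\|\theta'-\theta\|_2^2$ for all $\theta,\theta'$. The inequalities hold pointwise (almost surely). *)

(* Defs.v *)
From HB Require Import structures.
From mathcomp Require Import all_boot all_order all_algebra.
From mathcomp Require Import all_classical all_reals all_analysis.
Set Implicit Arguments. Unset Strict Implicit. Unset Printing Implicit Defensive.
Import Order.TTheory GRing.Theory Num.Theory.
Import numFieldNormedType.Exports.
Local Open Scope classical_set_scope.
Local Open Scope ring_scope.

Definition dotv {R : realType} {p : nat} (u v : 'rV[R]_p) : R :=
  \sum_(i < p) u 0 i * v 0 i.
Definition sqnorm2 {R : realType} {p : nat} (v : 'rV[R]_p) : R := dotv v v.
Definition norm2 {R : realType} {p : nat} (v : 'rV[R]_p) : R := Num.sqrt (sqnorm2 v).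

Definition basisv {R : realType} {p : nat} (i : 'I_p) : 'rV[R]_p :=
  \row_(j < p) (i == j)%:R.

Definition grad {R : realType} {p : nat} (f : 'rV[R]_p -> R) (x : 'rV[R]_p)
  : 'rV[R]_p := \row_(i < p) ('d f x) (basisv i).

Definition strongly_convex {R : realType} {p : nat} (m : R) (f : 'rV[R]_p -> R) :=
  forall th th' : 'rV[R]_p,
    f th + dotv (grad f th) (th' - th) + m / 2 * sqnorm2 (th' - th) <= f th'.

Definition lipschitz_grad {R : realType} {p : nat} (f : 'rV[R]_p -> R) :=
  exists K : R, forall x y : 'rV[R]_p,
    norm2 (grad f x - grad f y) <= K * norm2 (x - y).

Definition lint {R : realType} (a b : R) (F : R -> R) : R :=
  Rintegral (@lebesgue_measure R) `[a, b] F.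

Definition vint {R : realType} {p : nat} (a b : R) (F : R -> 'rV[R]_p)
  : 'rV[R]_p := \row_(i < p) lint a b (fun s => F s 0 i).

Definition mutually_indep_events {d} {Omega : measurableType d} {R : realType}
  (P : probability Omega R) {I : eqType} (E : I -> set Omega) :=
  forall s : seq I, uniq s ->
    P (\bigcap_(i in [set x | x \in s]) E i) = (\prod_(i <- s) P (E i))%E.

Definition mutually_indep_rv {d} {Omega : measurableType d} {R : realType}
  (P : probability Omega R) {I : eqType} (Z : I -> Omega -> R) :=
  forall A : I -> set R, (forall i, measurable (A i)) ->
    mutually_indep_events P (fun i => Z i @^-1` A i).

Definition rvec {d} {Omega : measurableType d} {R : realType} {p : nat}
  (X : Omega -> 'rV[R]_p) :=
  forall i : 'I_p, measurable_fun setT (fun w => X w 0 i).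

Definition sq_integrable {d} {Omega : measurableType d} {R : realType} {p : nat}
  (P : probability Omega R) (X : Omega -> 'rV[R]_p) :=
  rvec X /\ P.-integrable setT (fun w => (sqnorm2 (X w))%:E).

Definition brownian_motion {d} {Omega : measurableType d} {R : realType} {p : nat}
  (P : probability Omega R) (W : Omega -> R -> 'rV[R]_p) :=
  [/\ (forall w, W w 0 = 0),
      (forall w, {within `[0, +oo[, continuous (W w)}),
      (forall t, 0 <= t -> rvec (fun w => W w t)) &
      (forall (n : nat) (t : nat -> R), 0 <= t 0%N ->
         (forall k, (k < n)%N -> t k < t k.+1) ->
         let Z := fun ki : 'I_n * 'I_p =>
           fun w => (W w (t ki.1.+1) - W w (t ki.1)) 0 ki.2 in
         mutually_indep_rv P Z /\
         forall ki : 'I_n * 'I_p, forall A : set R, measurable A ->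
           P (Z ki @^-1` A) =
             normal_prob 0 (Num.sqrt (t ki.1.+1 - t ki.1)) A)].

(* independence of the process W from the random vector Y:
   for every finite set of times, the sigma-algebras generated by Y and by
   (W_t)_{t in the set} are independent (checked on measurable rectangles,
   which form a generating pi-system). *)
Definition indep_process_rvec {d} {Omega : measurableType d} {R : realType}
  {p : nat} (P : probability Omega R) (W : Omega -> R -> 'rV[R]_p)
  (Y : Omega -> 'rV[R]_p) :=
  forall (ts : seq R) (A : 'I_p -> set R) (B : R -> 'I_p -> set R),
    (forall i, measurable (A i)) -> (forall t i, measurable (B t i)) ->
    let EY := \bigcap_(i in [set: 'I_p]) ((fun w => Y w 0 i) @^-1` A i) in
    let EW := \bigcap_(t in [set x | x \in ts])
                \bigcap_(i in [set: 'I_p]) ((fun w => W w t 0 i) @^-1` B t i) in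
    P (EY `&` EW) = (P EY * P EW)%E.

(* Main.v *)
Require Import Defs.
From HB Require Import structures.
From mathcomp Require Import all_boot all_order all_algebra.
From mathcomp Require Import all_classical all_reals all_analysis.
From mathcomp Require Import ring lra.
Import Order.TTheory GRing.Theory Num.Theory.
Import numFieldNormedType.Exports.
Local Open Scope classical_set_scope.
Local Open Scope ring_scope.

Section Helpers.
Context {R : realType}.
Implicit Types (h : R) (F G : R -> R).

Definition cw h F := {within `[0, h], continuous F}.

Lemma lint00 F : lint 0 0 F = 0.
Proof. by rewrite /lint set_itv1 Rintegral_set1. Qed.

Lemma cw_int h F : cw h F -> (@lebesgue_measure R).-integrable `[0, h] (EFin \o F).
Proof. move=> c; apply: continuous_compact_integrable => //; exact: segment_compact. Qed.

Lemma cwD h F G : cw h F -> cw h G -> cw h (fun s => F s + G s).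
Proof. by rewrite /cw => cF cG x; exact: (continuousD (cF x) (cG x)). Qed.
Lemma cwB h F G : cw h F -> cw h G -> cw h (fun s => F s - G s).
Proof. by rewrite /cw => cF cG x; exact: (continuousB (cF x) (cG x)). Qed.
Lemma cwM h F G : cw h F -> cw h G -> cw h (fun s => F s * G s).
Proof. by rewrite /cw => cF cG x; exact: (continuousM (cF x) (cG x)). Qed.
Lemma cwC h (c : R) : cw h (fun=> c).
Proof. by rewrite /cw => x; apply: cvg_cst. Qed.

Lemma lintD h F G : cw h F -> cw h G -> lint 0 h (fun s => F s + G s) = lint 0 h F + lint 0 h G.
Proof. by move=> cF cG; rewrite /lint RintegralD //; apply: cw_int. Qed.
Lemma lintB h F G : cw h F -> cw h G -> lint 0 h (fun s => F s - G s) = lint 0 h F - lint 0 h G.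
Proof. by move=> cF cG; rewrite /lint RintegralB //; apply: cw_int. Qed.
Lemma lintZ h (c : R) F : cw h F -> lint 0 h (fun s => c * F s) = c * lint 0 h F.
Proof. by move=> cF; rewrite /lint RintegralZl //; apply: cw_int. Qed.
Lemma lint_ge0 h F : (forall s, 0 <= s <= h -> 0 <= F s) -> 0 <= lint 0 h F.
Proof. move=> H; apply: Rintegral_ge0 => x /=; rewrite in_itv /=; exact: H. Qed.
Lemma lint_cst h (c : R) : 0 <= h -> lint 0 h (fun=> c) = c * h.
Proof.
move=> h0; rewrite /lint Rintegral_cst // /= lebesgue_measure_itv /=.
case: ifPn => [_|]; first by rewrite /= subr0.
by rewrite lte_fin -leNgt => hle; have -> : h = 0 by apply/eqP; rewrite eq_le hle h0.
Qed.
Lemma cw_sum h (p : nat) (F : 'I_p -> R -> R) : (forall i, cw h (F i)) ->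
  cw h (fun s => \sum_(i < p) F i s).
Proof.
elim: p F => [|p IH] F cF.
  rewrite (_ : (fun s => _) = fun=> 0); first exact: cwC.
  by apply: boolp.funext => s; rewrite big_ord0.
rewrite (_ : (fun s => _) = fun s => \sum_(i < p) F (widen_ord (leqnSn p) i) s + F ord_max s).
  by apply: cwD => //; apply: IH.
by apply: boolp.funext => s; rewrite big_ord_recr.
Qed.

Lemma lint_sum h (p : nat) (F : 'I_p -> R -> R) : 0 <= h -> (forall i, cw h (F i)) ->
  lint 0 h (fun s => \sum_(i < p) F i s) = \sum_(i < p) lint 0 h (F i).
Proof.
move=> h0; elim: p F => [|p IH] F cF.
  rewrite big_ord0 (_ : (fun s => _) = fun=> 0); first by rewrite lint_cst // mul0r.
  by apply: boolp.funext => s; rewrite big_ord0.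
rewrite big_ord_recr /= -IH //.
rewrite -lintD //; last exact: cw_sum.
by congr lint; apply: boolp.funext => s; rewrite big_ord_recr.
Qed.
Lemma ftc_sq h (a : R -> R) (c : R) : 0 < h -> cw h a ->
  lint 0 h (fun s => 2 * ((c + lint 0 s a) * a s)) = (c + lint 0 h a) ^+ 2 - c ^+ 2.
Proof.
move=> h0 ca.
have ia := @cw_int h a ca.
pose F := fun s => lint 0 s a.
pose H := fun s => c + F s.
have eH : H = (cst c + F)%R by apply: boolp.funext.
have [ca_in ca0 cah] := (@continuous_within_itvP _ _ _ 0 h a h0).1 ca.
have dH : forall x, x \in `]0, h[ -> is_derive x (1:R) H (a x).
  move=> x xI; have /andP[x0 xh] : (0 < x) && (x < h) by rewrite in_itv /= in xI.
  have [dF F'] := @continuous_FTC1_closed R a 0 x h xh ia x0 (ca_in x xI).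
  have dF' : is_derive x (1:R) F (a x).
    by apply: (DeriveDef dF); rewrite -derive1E; exact: F'.
  rewrite eH; have K := (is_deriveD (is_derive_cst c x 1) dF'). rewrite add0r in K; exact: K.
have cF := @parameterized_integral_continuous R 0 h a (ltW h0) ia.
have [_ cF0 cFh] := (continuous_within_itvP _ h0).1 cF.
have dHo : derivable_oo_LRcontinuous H 0 h.
  split.
  - by move=> x xI; have := dH x xI; case.
  - by rewrite eH; apply: cvgD => //; exact: cvg_cst.
  - by rewrite eH; apply: cvgD => //; exact: cvg_cst.
have H'a : {in `]0, h[, (H^`())%classic =1 a}.
  by move=> x xI; rewrite derive1E; have := dH x xI => dHx; rewrite derive_val.
have := @Rintegration_by_parts R H H a a 0 h h0 ca dHo H'a ca dHo H'a.
have cHa : cw h (fun s => H s * a s).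
  apply: cwM => //; exact: derivable_oo_LRcontinuous_within dHo.
rewrite lintZ //.
rewrite (_ : \int[lebesgue_measure]_(x in `[0, h]) (a x * H x) = lint 0 h (fun s => H s * a s)); last first.
  by rewrite /lint; apply: eq_Rintegral => x _; rewrite mulrC.
rewrite -/(lint 0 h (fun s => H s * a s)).
move=> E.
change (2 * lint 0 h (fun s => H s * a s) = (c + lint 0 h a) ^+ 2 - c ^+ 2).
move: E; set I := lint 0 h _; move=> E.
have -> : 2 * I = H h * H h - H 0 * H 0 by rewrite mulr2n mulrDl !mul1r {1}E; lra.
by rewrite /H /F lint00 addr0 !expr2.
Qed.
Lemma cw_pint h (a : R -> R) : 0 <= h -> cw h a -> cw h (fun s => lint 0 s a).
Proof. by move=> h0 ca; exact: (@parameterized_integral_continuous R 0 h a h0 (@cw_int h a ca)). Qed.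

Lemma ftc_vec h (p : nat) (g : R -> 'rV[R]_p) (c : 'rV[R]_p) : 0 < h ->
  (forall i, cw h (fun s => g s 0 i)) ->
  lint 0 h (fun s => 2 * dotv (c + vint 0 s g) (g s)) = sqnorm2 (c + vint 0 h g) - sqnorm2 c.
Proof.
move=> h0 cg.
rewrite (_ : (fun s => _) = fun s => \sum_(i < p)
   2 * ((c 0 i + lint 0 s (fun u => g u 0 i)) * g s 0 i)); last first.
  by apply: boolp.funext => s; rewrite /dotv mulr_sumr; apply: eq_bigr => i _; rewrite !mxE.
rewrite lint_sum; last 2 first.
- exact: ltW.
- move=> i; apply: cwM; first exact: cwC.
  apply: cwM => //; apply: cwD; first exact: cwC.
  by apply: cw_pint => //; exact: ltW.
rewrite /sqnorm2 /dotv -sumrB; apply: eq_bigr => i _.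
by rewrite ftc_sq // !mxE !expr2.
Qed.
Lemma entry_le_mx (p : nat) (v : 'rV[R]_p) j : `|v 0 j| <= `|v|.
Proof. rewrite [X in _ <= X]mx_normrE. exact: (le_bigmax _ _ (0, j)). Qed.

Lemma sqnorm2_ge0 (p : nat) (v : 'rV[R]_p) : 0 <= sqnorm2 v.
Proof. by rewrite /sqnorm2 /dotv; apply: sumr_ge0 => j _; rewrite -expr2 sqr_ge0. Qed.

Lemma entry_le_norm2 (p : nat) (v : 'rV[R]_p) j : `|v 0 j| <= norm2 v.
Proof.
rewrite /norm2 -sqrtr_sqr ler_sqrt; last exact: sqnorm2_ge0.
rewrite /sqnorm2 /dotv (bigD1 j) //= expr2 lerDl.
by apply: sumr_ge0 => k _; rewrite -expr2 sqr_ge0.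
Qed.

Lemma norm2_le_mx (p : nat) (v : 'rV[R]_p) : norm2 v <= Num.sqrt p%:R * `|v|.
Proof.
rewrite /norm2 -[`|v|]ger0_norm // -sqrtr_sqr -sqrtrM //.
rewrite ler_sqrt; last by apply: mulr_ge0 => //; rewrite sqr_ge0.
rewrite /sqnorm2 /dotv.
have -> : p%:R * `|v| ^+ 2 = \sum_(j < p) `|v| ^+ 2.
  by rewrite sumr_const card_ord mulr_natl.
apply: ler_sum => j _.
rewrite -expr2 -real_normK ?num_real //; apply: lerXn2r => //; rewrite ?nnegrE //.
exact: entry_le_mx.
Qed.

Lemma entryB (p : nat) (u v : 'rV[R]_p) j : (u - v) 0 j = u 0 j - v 0 j.
Proof. by rewrite !mxE. Qed.

Lemma grad_cont (p : nat) (f : 'rV[R]_p -> R) : lipschitz_grad f ->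
  forall i, continuous (fun x : 'rV[R]_p => grad f x 0 i).
Proof.
move=> [K HK] i x.
pose C := (`|K| + 1) * (Num.sqrt p%:R + 1).
have C0 : 0 < C by apply: mulr_gt0; apply: ltr_pwDr => //; rewrite ?sqrtr_ge0.
have FF : Filter (nbhs (x : 'rV[R]_p)) := nbhs_filter (x : 'rV[R]_p).
apply/(@cvgrPdist_lt _ _ _ (nbhs x) FF) => e e0.
have Hn : \forall z \near x, `|x - z| < e / C :=
  (@cvgr_dist_lt _ _ _ (nbhs x) FF id x (@cvg_id _ (nbhs x)) (e / C) (divr_gt0 e0 C0)).
move: Hn; apply: filterS => z Hz.
rewrite -entryB.
apply: (le_lt_trans (@entry_le_norm2 p _ i)).
apply: (le_lt_trans (HK x z)).
apply: (@le_lt_trans _ _ (C * `|x - z|)); last by rewrite -ltr_pdivlMl // mulrC.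
have n0 : 0 <= norm2 (x - z) by rewrite /norm2 sqrtr_ge0.
apply: (le_trans (ler_wpM2r n0 (ler_norm K))).
apply: (@le_trans _ _ ((`|K| + 1) * norm2 (x - z))).
  by rewrite ler_wpM2r // lerDl.
rewrite /C -mulrA ler_wpM2l //.
apply: (le_trans (@norm2_le_mx p (x - z))); apply: ler_wpM2r => //; by rewrite lerDl.
Qed.
Lemma eq_lint h F G : (forall s, 0 <= s <= h -> F s = G s) -> lint 0 h F = lint 0 h G.
Proof. by move=> H; apply: eq_Rintegral => s; rewrite inE /= in_itv /= => /H. Qed.

Definition cwe h {p : nat} (V : R -> 'rV[R]_p) := forall i, cw h (fun s => V s 0 i).

Lemma cwe_of h (p : nat) (V : R -> 'rV[R]_p) : {within `[0, h], continuous V} -> cwe h V.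
Proof. by move=> cV i x; exact: (continuous_comp (cV x) (@coord_continuous _ 1 p 0 i _)). Qed.

Lemma cweD h (p : nat) (U V : R -> 'rV[R]_p) : cwe h U -> cwe h V -> cwe h (fun s => U s + V s).
Proof.
move=> cU cV i; rewrite (_ : (fun s => _) = fun s => U s 0 i + V s 0 i); first exact: cwD.
by apply: boolp.funext => s; rewrite mxE.
Qed.
Lemma cweB h (p : nat) (U V : R -> 'rV[R]_p) : cwe h U -> cwe h V -> cwe h (fun s => U s - V s).
Proof.
move=> cU cV i; rewrite (_ : (fun s => _) = fun s => U s 0 i - V s 0 i); first exact: cwB.
by apply: boolp.funext => s; rewrite entryB.
Qed.
Lemma cweZ h (p : nat) (a : R) (V : R -> 'rV[R]_p) : cwe h V -> cwe h (fun s => a *: V s).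
Proof.
move=> cV i; rewrite (_ : (fun s => _) = fun s => a * V s 0 i); first by apply: cwM => //; exact: cwC.
by apply: boolp.funext => s; rewrite mxE.
Qed.
Lemma cweC h (p : nat) (c : 'rV[R]_p) : cwe h (fun=> c).
Proof. by move=> i; exact: cwC. Qed.

Lemma cw_dotv h (p : nat) (U V : R -> 'rV[R]_p) : cwe h U -> cwe h V -> cw h (fun s => dotv (U s) (V s)).
Proof. by move=> cU cV; rewrite /dotv; apply: cw_sum => i; apply: cwM. Qed.

Lemma cw_compc h (F : R -> R) (G : R -> R) : continuous F -> cw h G -> cw h (fun s => F (G s)).
Proof. by move=> cF cG x; exact: (continuous_comp (cG x) (cF _)). Qed.

Lemma cw_compv h (p : nat) (F : 'rV[R]_p -> R) (V : R -> 'rV[R]_p) : continuous F ->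
  {within `[0, h], continuous V} -> cw h (fun s => F (V s)).
Proof. by move=> cF cV x; exact: (continuous_comp (cV x) (cF _)). Qed.

Lemma dotvC (p : nat) (u v : 'rV[R]_p) : dotv u v = dotv v u.
Proof. by rewrite /dotv; apply: eq_bigr => i _; rewrite mulrC. Qed.
Lemma dotvDr (p : nat) (u v w : 'rV[R]_p) : dotv u (v + w) = dotv u v + dotv u w.
Proof. by rewrite /dotv -big_split; apply: eq_bigr => i _; rewrite mxE mulrDr. Qed.
Lemma dotvZr (p : nat) (a : R) (u v : 'rV[R]_p) : dotv u (a *: v) = a * dotv u v.
Proof. by rewrite /dotv mulr_sumr; apply: eq_bigr => i _; rewrite mxE mulrCA. Qed.
Lemma affine_cont (p : nat) (X : 'rV[R]_p) (a : R) : continuous (fun v : 'rV[R]_p => X + a *: v).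
Proof.
move=> v.
have FF : Filter (nbhs (v : 'rV[R]_p)) := nbhs_filter (v : 'rV[R]_p).
apply: continuousD; first exact: (@cvg_cst _ X _ (nbhs v) FF).
apply: continuousZ; first exact: (@cvg_cst _ a _ (nbhs v) FF).
exact: cvg_id.
Qed.
Lemma arith1 (sD c IA IB IC IE m : R) : IE = sD - c -> 0 <= IA - m * IC - IE ->
  sD + m * IB <= c + IA + m * (IB - IC).
Proof. move=> H1 H2; lra. Qed.

Lemma arith2 (sD c IfL IB IdW IE m h fXh fLh r : R) : IE = sD - c ->
  0 <= 2 * (fXh * h - IfL) - 2 * r * IdW - m * IB - IE ->
  sD + m * IB <= c + 2 * h * (fXh - fLh) + 2 * ((fLh * h - IfL) - r * IdW).
Proof. move=> H1 H2; lra. Qed.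

Lemma arith_pt (fL fX dD dW B m r : R) : fL + (dD + r * dW) + m / 2 * B <= fX ->
  0 <= 2 * (fX - fL) - 2 * r * dW - m * B - 2 * dD.
Proof. move=> H; lra. Qed.
End Helpers.

Theorem lemma4 (R : realType) (p : nat) (d : measure_display)
  (Omega : measurableType d) (P : probability Omega R)
  (f : 'rV[R]_p -> R) (m : R)
  (X Y : Omega -> 'rV[R]_p) (W L : Omega -> R -> 'rV[R]_p) :
  (forall x, differentiable f x) ->
  lipschitz_grad f ->
  0 <= m -> strongly_convex m f ->
  sq_integrable P X -> sq_integrable P Y ->
  brownian_motion P W -> indep_process_rvec P W Y ->
  (* L solves dL_t = -grad f(L_t) dt + sqrt 2 dW_t, L_0 = Y (pathwise) *)
  (forall w, {within `[0, +oo[, continuous (L w)}) ->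
  (forall w t, 0 <= t ->
     L w t = Y w - vint 0 t (fun s => grad f (L w s)) + Num.sqrt 2 *: W w t) ->
  let Xt := fun w t => X w + Num.sqrt 2 *: W w t in
  let psi := fun w h =>
    sqnorm2 (Xt w h - L w h) + m * lint 0 h (fun s => sqnorm2 (Xt w h - L w s)) in
  let R1 := fun w h =>
    m * lint 0 h (fun s => sqnorm2 (Xt w h - L w s) - sqnorm2 (Xt w s - L w s)) in
  let R2 := fun w h =>
    2 * lint 0 h (fun s => f (L w h) - f (L w s)
                   - Num.sqrt 2 * dotv (W w h - W w s) (grad f (L w s))) in
  forall w h, 0 <= h ->
    psi w h <= sqnorm2 (X w - L w 0)
               + lint 0 h (fun s => 2 * (f (Xt w s) - f (L w s))) + R1 w h /\
    psi w h <= sqnorm2 (X w - L w 0)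
               + 2 * h * (f (Xt w h) - f (L w h)) + R2 w h.

Proof.
move=> fd lg m0 conv _ _ BM _ Lc Leq Xt psi R1 R2 w h h0.
have [W0 Wc _ _] := BM.
pose g := fun s => grad f (L w s).
have sub0h : (`[0, h] : set R) `<=` `[0, +oo[.
  by move=> s /=; rewrite !in_itv /= andbT => /andP[].
have cL : {within `[0, h], continuous (L w)} := continuous_subspaceW sub0h (Lc w).
have cW : {within `[0, h], continuous (W w)} := continuous_subspaceW sub0h (Wc w).
have cfc : continuous f by move=> x; exact: differentiable_continuous (fd x).
have cg : cwe h g.
  by move=> i; apply: (@cw_compv R h p (fun x => grad f x 0 i)) => //; exact: grad_cont.
have cLe : cwe h (L w) by apply: cwe_of.
have cWe : cwe h (W w) by apply: cwe_of.
have cXt : {within `[0, h], continuous (Xt w)}.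
  move=> x; rewrite /Xt.
  have := continuous_comp (cW x) (@affine_cont _ p (X w) (Num.sqrt 2) _).
  by move=> H; exact: H.
have cXte : cwe h (Xt w) by apply: cwe_of.
have vint0 : vint 0 0 g = 0 by apply/rowP => i; rewrite !mxE lint00.
have L0 : L w 0 = Y w by rewrite Leq // vint0 W0 scaler0 subr0 addr0.
pose D := fun s => Xt w s - L w s.
have Dform : forall s, 0 <= s -> D s = (X w - Y w) + vint 0 s g.
  move=> s s0; rewrite /D /Xt Leq //; move: (vint 0 s _) (W w s) => V Z.
  by apply/rowP => j; rewrite !mxE; lra.
have XL0 : X w - L w 0 = X w - Y w by rewrite L0.
move: h0; rewrite le_eqVlt => /predU1P[h0|hpos].
  subst h; rewrite /psi /R1 /R2 !lint00 !mulr0 !mul0r !addr0 /Xt W0 scaler0 addr0.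
  by split.
have h0 := ltW hpos.
have E1 : lint 0 h (fun s => 2 * dotv (D s) (g s)) = sqnorm2 (D h) - sqnorm2 (X w - L w 0).
  rewrite XL0 (Dform h h0) -ftc_vec //.
  by apply: eq_lint => s /andP[s0 _]; rewrite Dform.
have cD : cwe h D by apply: cweB.
have cfX : cw h (fun s => f (Xt w s)) by apply: cw_compv.
have cfL : cw h (fun s => f (L w s)) by apply: cw_compv.
have cA : cw h (fun s => 2 * (f (Xt w s) - f (L w s))) by apply: cwM; [exact: cwC | exact: cwB].
have cB : cw h (fun s => sqnorm2 (Xt w h - L w s)).
  by apply: cw_dotv; apply: cweB => //; exact: cweC.
have cC : cw h (fun s => sqnorm2 (Xt w s - L w s)) by apply: cw_dotv; apply: cweB.
have cE : cw h (fun s => 2 * dotv (D s) (g s)) by apply: cwM; [exact: cwC | exact: cw_dotv].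
have cdW : cw h (fun s => dotv (W w h - W w s) (g s)).
  by apply: cw_dotv => //; apply: cweB => //; exact: cweC.
split.
- have key : 0 <= lint 0 h (fun s => (2 * (f (Xt w s) - f (L w s)) - m * sqnorm2 (Xt w s - L w s))
                                  - 2 * dotv (D s) (g s)).
    apply: lint_ge0 => s _.
    have := conv (L w s) (Xt w s); rewrite dotvC /D /g.
    move: (f (L w s)) (f (Xt w s)) (dotv _ _) (sqnorm2 _) => a b c e H.
    lra.
  have cAC : cw h (fun s => m * sqnorm2 (Xt w s - L w s)) by apply: cwM => //; exact: cwC.
  rewrite (@lintB _ h (fun s => 2 * (f (Xt w s) - f (L w s)) - m * sqnorm2 (Xt w s - L w s))
     (fun s => 2 * dotv (D s) (g s)) (@cwB _ h _ _ cA cAC) cE) in key.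
  rewrite (@lintB _ h (fun s => 2 * (f (Xt w s) - f (L w s))) (fun s => m * sqnorm2 (Xt w s - L w s)) cA cAC) in key.
  rewrite (@lintZ _ h m (fun s => sqnorm2 (Xt w s - L w s)) cC) in key.
  rewrite /psi /R1 (@lintB _ h (fun s => sqnorm2 (Xt w h - L w s)) (fun s => sqnorm2 (Xt w s - L w s)) cB cC).
  rewrite /D in E1 key.
  exact: arith1 E1 key.
- have key : 0 <= lint 0 h (fun s => ((2 * (f (Xt w h) - f (L w s))
        - 2 * Num.sqrt 2 * dotv (W w h - W w s) (g s)) - m * sqnorm2 (Xt w h - L w s))
        - 2 * dotv (D s) (g s)).
    apply: lint_ge0 => s /andP[s0 _].
    have eqXs : Xt w h - L w s = D s + Num.sqrt 2 *: (W w h - W w s).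
      rewrite /D /Xt; move: (X w) (W w h) (W w s) (L w s) => A B C E.
      by apply/rowP => j; rewrite !mxE; lra.
    have := conv (L w s) (Xt w h).
    rewrite {1}eqXs dotvDr dotvZr (@dotvC _ p (grad f _) (D s)) (@dotvC _ p (grad f _) (W w h - W w s)).
    exact: arith_pt.
  have cP : cw h (fun s => 2 * (f (Xt w h) - f (L w s))).
    by apply: cwM; [exact: cwC | apply: cwB => //; exact: cwC].
  have cQ : cw h (fun s => 2 * Num.sqrt 2 * dotv (W w h - W w s) (g s)) by apply: cwM => //; exact: cwC.
  have cmB : cw h (fun s => m * sqnorm2 (Xt w h - L w s)) by apply: cwM => //; exact: cwC.
  rewrite (@lintB _ h _ (fun s => 2 * dotv (D s) (g s)) (@cwB _ h _ _ (@cwB _ h _ _ cP cQ) cmB) cE) in key.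
  rewrite (@lintB _ h _ (fun s => m * sqnorm2 (Xt w h - L w s)) (@cwB _ h _ _ cP cQ) cmB) in key.
  rewrite (@lintB _ h _ _ cP cQ) in key.
  rewrite (@lintZ _ h m _ cB) (@lintZ _ h (2 * Num.sqrt 2) _ cdW) in key.
  rewrite (@lintZ _ h 2 (fun s => f (Xt w h) - f (L w s))) in key; last by apply: cwB => //; exact: cwC.
  rewrite (@lintB _ h (fun=> f (Xt w h)) _ (cwC _ _) cfL) lint_cst // in key.
  rewrite /psi /R2.
  have cR : cw h (fun s => f (L w h) - f (L w s)) by apply: cwB => //; exact: cwC.
  rewrite (@lintB _ h (fun s => f (L w h) - f (L w s)) (fun s => Num.sqrt 2 * dotv (W w h - W w s) (grad f (L w s))) cR); last by apply: cwM => //; exact: cwC.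
  rewrite (@lintB _ h (fun=> f (L w h)) _ (cwC _ _) cfL) lint_cst //.
  rewrite (@lintZ _ h (Num.sqrt 2) _ cdW).
  rewrite /D in E1 key.
  exact: arith2 E1 key.
Qed.
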